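(* Let $G$ be a topological group and $H$ a normal, closed, discrete subgroup of $G$, acting on $G$ on the right by $(g,h)\mapsto g\cdot h$. Let $U$ be an open symmetric neighborhood of $1_G$ (i.e. $U=U^{-1}$) such that $U^4\cap H=\{1_G\}$, where $U^4=U\cdot U\cdot U\cdot U$. Then the family $\{U\cdot g\}_{g\in G}$ is an overlay structure of this action of $H$ on $G$.
   Context: For a continuous map $p:X\to Y$: a slice of $p$ is an open set $U\subseteq X$ such that $p^{-1}(p(U))$ is the disjoint union of a family of open sets $U_s$ ($s\in S$), each mapped by $p$ homeomorphically onto $p(U)$, with $U=U_t$ for some $t\in S$. A covering structure of $p$ is an open cover $\mathcal S$ of $X$ by slices of $p$ such that for every $U\in\mathcal S$, $p^{-1}(p(U))$ is the disjoint union of a family $\{U_j\}_{j\in J}$ of elements of $\mathcal S$, each mapped homeomorphically onto $p(U)$. For a cover $\mathcal S$ and $x\in X$, $st(x,\mathcal S)=\bigcup\{U\in\mathcal S: x\in U\}$. For a free action of a group $H$ on $X$: a slice of the action is an open $U\subseteq X$ with $U\cap(h\cdot U)\neq\emptyset\Rightarrow h=1_H$. An overlay structure of the action is a covering structure $\mathcal U$ of the projection $X\to X/H$ (orbit space with quotient topology) such that $st(x,\mathcal U)$ is a slice of the action for every $x\in X$. *)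

(* Defs.v *)
From Stdlib Require Import Classical.

Definition set (X : Type) := X -> Prop.

Definition seteq {X : Type} (A B : set X) : Prop := forall x, A x <-> B x.
Definition setI {X : Type} (A B : set X) : set X := fun x => A x /\ B x.
Definition image {X Y : Type} (f : X -> Y) (A : set X) : set Y :=
  fun y => exists x, A x /\ f x = y.
Definition preimage {X Y : Type} (f : X -> Y) (B : set Y) : set X :=
  fun x => B (f x).

Definition is_topology {X : Type} (T : set X -> Prop) : Prop :=
  T (fun _ => True) /\
  (forall A B, T A -> T B -> T (setI A B)) /\
  (forall F : set X -> Prop, (forall A, F A -> T A) ->
     T (fun x => exists A, F A /\ A x)).

Definition continuous {X Y : Type} (TX : set X -> Prop) (TY : set Y -> Prop)
  (f : X -> Y) : Prop :=
  forall V, TY V -> TX (preimage f V).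

Definition homeo_onto_image {X Y : Type} (TX : set X -> Prop) (TY : set Y -> Prop)
  (f : X -> Y) (A : set X) : Prop :=
  (forall x y, A x -> A y -> f x = f y -> x = y) /\
  (* the restriction A -> f(A) is continuous *)
  (forall O, TY O -> exists W, TX W /\ seteq (setI A (preimage f O)) (setI W A)) /\
  (* the restriction A -> f(A) is open *)
  (forall W, TX W -> exists O, TY O /\ seteq (image f (setI W A)) (setI O (image f A))).

Definition sheets {X Y : Type} (TX : set X -> Prop) (TY : set Y -> Prop)
  (p : X -> Y) (U : set X) (J : Type) (F : J -> set X) : Prop :=
  (forall j, TX (F j)) /\
  (forall i j, i <> j -> forall x, ~ (F i x /\ F j x)) /\
  seteq (preimage p (image p U)) (fun x => exists j, F j x) /\
  (forall j, seteq (image p (F j)) (image p U) /\ homeo_onto_image TX TY p (F j)).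

Definition slice {X Y : Type} (TX : set X -> Prop) (TY : set Y -> Prop)
  (p : X -> Y) (U : set X) : Prop :=
  TX U /\
  exists (S : Type) (F : S -> set X),
    sheets TX TY p U S F /\ exists t, seteq (F t) U.

Definition covering_structure {X Y : Type} (TX : set X -> Prop) (TY : set Y -> Prop)
  (p : X -> Y) (C : set X -> Prop) : Prop :=
  (forall U, C U -> slice TX TY p U) /\
  (forall x, exists U, C U /\ U x) /\
  (forall U, C U -> exists (J : Type) (F : J -> set X),
      (forall j, C (F j)) /\ sheets TX TY p U J F).

Definition star {X : Type} (x : X) (C : set X -> Prop) : set X :=
  fun y => exists U, C U /\ U x /\ U y.

Definition orbit {X G : Type} (act : X -> G -> X) (H : set G) (x : X) : set X :=
  fun y => exists h, H h /\ y = act x h.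

Definition orbit_space {X G : Type} (act : X -> G -> X) (H : set G) : Type :=
  { O : set X | exists x, O = orbit act H x }.

Definition orbit_proj {X G : Type} (act : X -> G -> X) (H : set G) (x : X)
  : orbit_space act H :=
  exist _ (orbit act H x) (ex_intro _ x eq_refl).

Definition quotient_topology {X G : Type} (TX : set X -> Prop) (act : X -> G -> X)
  (H : set G) : set (orbit_space act H) -> Prop :=
  fun V => TX (preimage (orbit_proj act H) V).

Definition action_slice {X G : Type} (TX : set X -> Prop) (act : X -> G -> X)
  (H : set G) (one : G) (U : set X) : Prop :=
  TX U /\
  forall h, H h -> (exists y, U y /\ exists u, U u /\ y = act u h) -> h = one.

Definition overlay_structure {X G : Type} (TX : set X -> Prop) (act : X -> G -> X)
  (H : set G) (one : G) (C : set X -> Prop) : Prop :=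
  covering_structure TX (quotient_topology TX act H) (orbit_proj act H) C /\
  forall x, action_slice TX act H one (star x C).

Definition topological_group {G : Type} (T : set G -> Prop)
  (mul : G -> G -> G) (inv : G -> G) (one : G) : Prop :=
  is_topology T /\
  (forall x y z, mul x (mul y z) = mul (mul x y) z) /\
  (forall x, mul one x = x) /\ (forall x, mul x one = x) /\
  (forall x, mul (inv x) x = one) /\ (forall x, mul x (inv x) = one) /\
  (* multiplication G x G -> G continuous for the product topology *)
  (forall a b W, T W -> W (mul a b) ->
     exists A B, T A /\ T B /\ A a /\ B b /\
       forall x y, A x -> B y -> W (mul x y)) /\
  continuous T T inv.

Definition subgroup {G : Type} (mul : G -> G -> G) (inv : G -> G) (one : G)
  (H : set G) : Prop :=
  H one /\ (forall x y, H x -> H y -> H (mul x y)) /\ (forall x, H x -> H (inv x)).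

Definition normal_sub {G : Type} (mul : G -> G -> G) (inv : G -> G) (H : set G) : Prop :=
  forall g h, H h -> H (mul (mul g h) (inv g)).

Definition closed_set {G : Type} (T : set G -> Prop) (H : set G) : Prop :=
  T (fun x => ~ H x).

Definition discrete_sub {G : Type} (T : set G -> Prop) (H : set G) : Prop :=
  forall h, H h -> exists V, T V /\ forall x, (V x /\ H x) <-> x = h.

(* Main.v *)
Require Import Defs.
From Stdlib Require Import FunctionalExtensionality PropExtensionality ProofIrrelevance.

Lemma set_ext {X : Type} (A B : set X) : seteq A B -> A = B.
Proof.
  intro E; apply functional_extensionality; intro x;
  apply propositional_extensionality; apply E.
Qed.

Lemma sig_ext {A : Type} {P : A -> Prop} (a b : sig P) :
  proj1_sig a = proj1_sig b -> a = b.
Proof.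
  destruct a as [a pa], b as [b pb]; simpl; intros E; subst b.
  f_equal; apply proof_irrelevance.
Qed.

Ltac gs :=
  repeat match goal with
  | A : forall x y z, ?m x (?m y z) = ?m (?m x y) z |- context [?m ?a (?m ?b ?c)] => rewrite (A a b c)
  | E : forall x y, ?m (?m x (?i y)) y = x |- context [?m (?m ?a (?i ?b)) ?b] => rewrite (E a b)
  | E : forall x y, ?m (?m x y) (?i y) = x |- context [?m (?m ?a ?b) (?i ?b)] => rewrite (E a b)
  | E : forall x, ?m (?i x) x = ?o |- context [?m (?i ?a) ?a] => rewrite (E a)
  | E : forall x, ?m x (?i x) = ?o |- context [?m ?a (?i ?a)] => rewrite (E a)
  | E : forall x, ?m ?o x = x |- context [?m ?o ?a] => rewrite (E a)
  | E : forall x, ?m x ?o = x |- context [?m ?a ?o] => rewrite (E a)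
  | E : forall x y, ?i (?m x y) = ?m (?i y) (?i x) |- context [?i (?m ?a ?b)] => rewrite (E a b)
  | E : forall x, ?i (?i x) = x |- context [?i (?i ?a)] => rewrite (E a)
  end.

Theorem proposition3p5 (G : Type) (T : set G -> Prop)
  (mul : G -> G -> G) (inv : G -> G) (one : G)
  (HG : topological_group T mul inv one)
  (H : set G) (Hsub : subgroup mul inv one H) (Hnorm : normal_sub mul inv H)
  (Hclosed : closed_set T H) (Hdisc : discrete_sub T H)
  (U : set G) (HUopen : T U) (HU1 : U one) (HUsym : forall x, U x <-> U (inv x))
  (HU4 : forall x,
     ((exists u1 u2 u3 u4, U u1 /\ U u2 /\ U u3 /\ U u4 /\
         x = mul (mul (mul u1 u2) u3) u4) /\ H x) <-> x = one) :
  overlay_structure T (fun g h => mul g h) H one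
    (fun V => exists g, seteq V (fun x => exists u, U u /\ x = mul u g)).
Proof.
  destruct HG as [[HT1 [HTI HTU]] [Hassoc [Hl1 [Hr1 [Hlinv [Hrinv [Hmulc Hinvc]]]]]]].
  destruct Hsub as [H1 [HM HI]].
  assert (c1 : forall x y, mul (mul x (inv y)) y = x)
    by (intros; rewrite <- Hassoc, Hlinv, Hr1; reflexivity).
  assert (c2 : forall x y, mul (mul x y) (inv y) = x)
    by (intros; rewrite <- Hassoc, Hrinv, Hr1; reflexivity).
  assert (lcan : forall a x y, mul a x = mul a y -> x = y).
  { intros a x y E. apply (f_equal (mul (inv a))) in E.
    rewrite !Hassoc, Hlinv, !Hl1 in E. exact E. }
  assert (inv_mul : forall x y, inv (mul x y) = mul (inv y) (inv x)).
  { intros x y. apply (lcan (mul x y)). rewrite Hrinv. gs; try reflexivity. }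
  assert (inv_inv : forall x, inv (inv x) = x).
  { intros x. apply (lcan (inv x)). rewrite Hrinv, Hlinv. reflexivity. }
  assert (UI : forall u, U u -> U (inv u)) by (intros u Hu; exact (proj1 (HUsym u) Hu)).
  assert (KEY : forall a b c d, U a -> U b -> U c -> U d ->
            H (mul (mul (mul a b) c) d) -> mul (mul (mul a b) c) d = one).
  { intros a b c d Ha Hb Hc Hd Hh. apply HU4. split; auto.
    exists a, b, c, d; auto. }
  assert (open_loc : forall S : set G,
    (forall x, S x -> exists A, T A /\ A x /\ forall y, A y -> S y) -> T S).
  { intros S HS.
    assert (E : S = (fun x => exists A, (T A /\ forall y, A y -> S y) /\ A x)).
    { apply set_ext. intro x. split.
      - intro Sx. destruct (HS x Sx) as [A [TA [Ax HA]]]. exists A; auto.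
      - intros [A [[_ HA] Ax]]. auto. }
    rewrite E. apply HTU. intros A [TA _]; exact TA. }
  assert (pre_open : forall W c, T W -> T (fun y => W (mul y c))).
  { intros W c TW. apply open_loc. intros x Wx.
    destruct (Hmulc x c W TW Wx) as [A [B [TA [TB [Ax [Bc HAB]]]]]].
    exists A. split; [exact TA|split; [exact Ax|]]. intros y Ay. apply HAB; auto. }
  assert (rt_open : forall W c, T W -> T (fun x => exists w, W w /\ x = mul w c)).
  { intros W c TW. apply open_loc. intros x [w [Ww Ex]].
    exists (fun y => W (mul y (inv c))). split; [apply pre_open; exact TW|split].
    - subst x. rewrite c2. exact Ww.
    - intros y Wy. exists (mul y (inv c)). split; [exact Wy|]. rewrite c1. reflexivity. }
  set (p := orbit_proj (fun g h => mul g h) H).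
  assert (orb_eq : forall x y, p x = p y <-> exists h, H h /\ y = mul x h).
  { intros x y. split.
    - intro E. apply (f_equal (@proj1_sig _ _)) in E. simpl in E.
      assert (Oy : orbit (fun g h => mul g h) H y y).
      { exists one. split; [exact H1|]. rewrite Hr1. reflexivity. }
      rewrite <- E in Oy. exact Oy.
    - intros [h [Hh Ey]]. apply sig_ext. simpl. apply set_ext. intro z.
      unfold orbit. split.
      + intros [k [Hk Ez]]. exists (mul (inv h) k). split; [apply HM; auto|].
        rewrite Ez, Ey. gs; try reflexivity.
      + intros [k [Hk Ez]]. exists (mul h k). split; [apply HM; auto|].
        rewrite Ez, Ey. gs; try reflexivity. }
  assert (sat_open : forall S, T S -> T (preimage p (image p S))).
  { intros S TS. apply open_loc. intros x [s [Ss Es]].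
    apply orb_eq in Es. destruct Es as [h [Hh Ex]].
    exists (fun y => S (mul y (inv h))). split; [apply pre_open; exact TS|split].
    - subst x. rewrite c2. exact Ss.
    - intros y Sy. exists (mul y (inv h)). split; [exact Sy|].
      apply orb_eq. exists h. split; [exact Hh|]. rewrite c1. reflexivity. }
  set (QT := quotient_topology T (fun g h => mul g h) H).
  set (Fam := fun (g : G) (j : {h | H h}) (x : G) =>
                exists u, U u /\ x = mul u (mul g (proj1_sig j))).
  assert (SHEETS : forall g, sheets T QT p (fun x => exists u, U u /\ x = mul u g)
                      {h | H h} (Fam g)).
  { intro g. split; [|split; [|split]].
    - intro j. apply rt_open. exact HUopen.
    - intros [h1 Hh1] [h2 Hh2] Hij x [[u1 [Hu1 E1]] [u2 [Hu2 E2]]].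
      simpl in E1, E2. apply Hij. apply sig_ext. simpl.
      assert (Eq : mul u1 (mul g h1) = mul u2 (mul g h2)) by (rewrite <- E1; exact E2).
      assert (E : mul (mul (mul (inv u2) u1) one) one
                  = mul (mul g (mul h2 (inv h1))) (inv g)).
      { generalize (f_equal (fun z => mul (mul (inv u2) z) (mul (inv h1) (inv g))) Eq).
        cbv beta. gs. intro X. exact X. }
      assert (Hin : H (mul (mul (mul (inv u2) u1) one) one)).
      { rewrite E. apply Hnorm. apply HM; auto. }
      apply KEY in Hin; auto.
      rewrite !Hr1 in Hin.
      assert (u1 = u2).
      { apply (lcan (inv u2)). rewrite Hin, Hlinv. reflexivity. }
      subst u2. apply lcan in Eq. apply lcan in Eq. exact Eq.
    - intro x. split.
      + intros [y [[u [Hu Ey]] Epy]]. apply orb_eq in Epy.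
        destruct Epy as [h [Hh Ex]]. exists (exist _ h Hh). exists u.
        split; [exact Hu|]. simpl. rewrite Ex, Ey. gs; try reflexivity.
      + intros [[h Hh] [u [Hu Ex]]]. simpl in Ex. exists (mul u g).
        split; [exists u; auto|]. apply orb_eq. exists h. split; [exact Hh|].
        rewrite Ex. gs; try reflexivity.
    - intros [h Hh]. split; [|split; [|split]].
      + intro z. split.
        * intros [x [[u [Hu Ex]] Ez]]. simpl in Ex. exists (mul u g).
          split; [exists u; auto|]. rewrite <- Ez. apply orb_eq.
          exists h. split; [exact Hh|]. rewrite Ex. gs; try reflexivity.
        * intros [y [[u [Hu Ey]] Ez]]. exists (mul u (mul g h)).
          split; [exists u; split; [exact Hu|reflexivity]|]. rewrite <- Ez.
          symmetry. apply orb_eq. exists h. split; [exact Hh|].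
          rewrite Ey. gs; try reflexivity.
      + intros x y [u1 [Hu1 Ex]] [u2 [Hu2 Ey]] Exy. simpl in Ex, Ey.
        apply orb_eq in Exy. destruct Exy as [k [Hk Eyk]].
        assert (Eq : mul u2 (mul g h) = mul (mul u1 (mul g h)) k)
          by (rewrite <- Ey, <- Ex; exact Eyk).
        assert (E : mul (mul (mul (inv u1) u2) one) one
                    = mul (mul (mul g h) k) (inv (mul g h))).
        { generalize (f_equal (fun z => mul (mul (inv u1) z) (inv (mul g h))) Eq).
          cbv beta. gs. intro X. exact X. }
        assert (Hin : H (mul (mul (mul (inv u1) u2) one) one)).
        { rewrite E. apply Hnorm. exact Hk. }
        apply KEY in Hin; auto.
        rewrite !Hr1 in Hin.
        assert (u2 = u1).
        { apply (lcan (inv u1)). rewrite Hin, Hlinv. reflexivity. }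
        subst u2. rewrite Ex, Ey. reflexivity.
      + intros O TO. exists (preimage p O). split; [exact TO|].
        intro x. unfold setI. tauto.
      + intros W TW. exists (image p (setI W (Fam g (exist _ h Hh)))). split.
        * unfold QT, quotient_topology. apply sat_open. apply HTI; [exact TW|].
          apply rt_open. exact HUopen.
        * intro z. unfold setI. split.
          -- intro Hz. split; [exact Hz|]. destruct Hz as [x [[_ Ax] Ex]].
             exists x. auto.
          -- intros [Hz _]. exact Hz. }
  assert (Copen : forall V : set G,
     (exists g, seteq V (fun x => exists u, U u /\ x = mul u g)) -> T V).
  { intros V [g Hg]. apply set_ext in Hg. subst V. apply rt_open. exact HUopen. }
  split; [split; [|split]|].
  - intros V [g Hg]. split; [apply Copen; exists g; exact Hg|].
    apply set_ext in Hg. subst V.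
    exists {h | H h}, (Fam g). split; [apply SHEETS|].
    exists (exist _ one H1). intro x. unfold Fam. simpl. rewrite Hr1. tauto.
  - intro x. exists (fun y => exists u, U u /\ y = mul u x). split.
    + exists x. intro y. tauto.
    + exists one. split; [exact HU1|]. rewrite Hl1. reflexivity.
  - intros V [g Hg]. apply set_ext in Hg. subst V.
    exists {h | H h}, (Fam g). split; [|apply SHEETS].
    intro j. exists (mul g (proj1_sig j)). intro x. unfold Fam. tauto.
  - intro x. split.
    + apply open_loc. intros y [V [CV [Vx Vy]]]. exists V.
      split; [apply Copen; exact CV|split; [exact Vy|]].
      intros z Vz. exists V. auto.
    + intros h Hh [y [[V1 [[g1 E1] [V1x V1y]]] [u [[V2 [[g2 E2] [V2x V2u]]] Eyu]]]].
      apply E1 in V1x, V1y. apply E2 in V2x, V2u.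
      destruct V1x as [b [Hb Ex1]]. destruct V1y as [a [Ha Ey]].
      destruct V2x as [d [Hd Ex2]]. destruct V2u as [c [Hc Eu]].
      assert (Eg1 : g1 = mul (inv b) x) by (rewrite Ex1; gs; try reflexivity).
      assert (Eg2 : g2 = mul (inv d) x) by (rewrite Ex2; gs; try reflexivity).
      rewrite Eg1 in Ey. rewrite Eg2 in Eu. subst y u.
      assert (E : mul (mul (mul d (inv c)) a) (inv b) = mul (mul x h) (inv x)).
      { generalize (f_equal (fun z => mul (mul (mul d (inv c)) z) (inv x)) Eyu).
        cbv beta. gs. intro X. exact X. }
      assert (Hin : H (mul (mul (mul d (inv c)) a) (inv b))).
      { rewrite E. apply Hnorm. exact Hh. }
      apply KEY in Hin; auto.
      rewrite E in Hin.
      apply (f_equal (fun z => mul (mul (inv x) z) x)) in Hin. cbv beta in Hin.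
      revert Hin. gs. auto.
Qed.
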